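(* Let $\xi$ be a Hausdorff convergence. Then $\xi$ has countable $\mathrm{S}_0$-character if and only if $\mathrm{I}_1\xi$ is a pretopology and $\xi$ is sequential (i.e., $\xi\ge\mathrm{T}\mathrm{I}_1\xi$). Moreover, in this case $\mathrm{I}_1\xi$ is the only pretopology $\sigma$ of countable character satisfying $\sigma\ge\xi\ge\mathrm{T}\sigma$.
   Context: A convergence $\xi$ on a set $X$ is a relation between filters on $X$ and points, written $x\in\lim_\xi\mathcal{F}$, with $\mathcal{F}\le\mathcal{G}\Rightarrow\lim_\xi\mathcal{F}\subset\lim_\xi\mathcal{G}$ and $x\in\lim_\xi\{x\}^\uparrow$. For convergences on the same set, $\xi\ge\theta$ ($\xi$ finer) means $\lim_\xi\mathcal{F}\subset\lim_\theta\mathcal{F}$ for every filter $\mathcal{F}$. $\xi$ is Hausdorff if every filter has at most one limit point. Vicinity filter $\mathcal{V}_\xi(x)$: intersection of all filters converging to $x$; $\xi$ is a pretopology if $x\in\lim_\xi\mathcal{V}_\xi(x)$ for all $x$. A set $O$ is $\xi$-open if $\lim_\xi\mathcal{F}\cap O\ne\emptyset\Rightarrow O\in\mathcal{F}$; $\mathrm{T}\xi$ is the topology of $\xi$-open sets. $\mathrm{I}_1\xi$ is the convergence with $x\in\lim_{\mathrm{I}_1\xi}\mathcal{F}$ iff there is a filter $\mathcal{H}\le\mathcal{F}$ with a countable filter-base and $x\in\lim_\xi\mathcal{H}$; $\xi$ has countable character if $\xi=\mathrm{I}_1\xi$. $\xi$ is sequential if $\xi\ge\mathrm{T}\mathrm{I}_1\xi$.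 $\xi$ has countable $\mathrm{S}_0$-character if there is a pretopology $\sigma$ of countable character on the same set with $\sigma\ge\xi\ge\mathrm{T}\sigma$. *)

(* Defs.v *)
Set Implicit Arguments.

Definition subset {X : Type} (A B : X -> Prop) : Prop := forall x, A x -> B x.

Record is_filter {X : Type} (F : (X -> Prop) -> Prop) : Prop := {
  filter_full : F (fun _ => True);
  filter_up : forall A B, subset A B -> F A -> F B;
  filter_inter : forall A B, F A -> F B -> F (fun x => A x /\ B x);
  filter_proper : ~ F (fun _ => False)
}.

Definition filter_le {X : Type} (F G : (X -> Prop) -> Prop) : Prop :=
  forall A, F A -> G A.

Definition principal {X : Type} (x : X) (A : X -> Prop) : Prop := A x.

(* a convergence relation: conv F x  means  x \in lim F *)
Definition Conv (X : Type) := ((X -> Prop) -> Prop) -> X -> Prop.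

Definition is_convergence {X : Type} (xi : Conv X) : Prop :=
  (forall F G x, is_filter F -> is_filter G -> filter_le F G -> xi F x -> xi G x)
  /\ (forall x, xi (principal x) x).

Definition conv_ge {X : Type} (xi theta : Conv X) : Prop :=
  forall F x, is_filter F -> xi F x -> theta F x.

Definition conv_eq {X : Type} (xi theta : Conv X) : Prop :=
  conv_ge xi theta /\ conv_ge theta xi.

Definition hausdorff {X : Type} (xi : Conv X) : Prop :=
  forall F x y, is_filter F -> xi F x -> xi F y -> x = y.

Definition vicinity {X : Type} (xi : Conv X) (x : X) (A : X -> Prop) : Prop :=
  forall F, is_filter F -> xi F x -> F A.

Definition pretopology {X : Type} (xi : Conv X) : Prop :=
  forall x, xi (vicinity xi x) x.

Definition is_open {X : Type} (xi : Conv X) (O : X -> Prop) : Prop :=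
  forall F x, is_filter F -> xi F x -> O x -> F O.

Definition Ttop {X : Type} (xi : Conv X) : Conv X :=
  fun F x => forall O, is_open xi O -> O x -> F O.

Definition countably_based {X : Type} (F : (X -> Prop) -> Prop) : Prop :=
  exists B : nat -> (X -> Prop), forall A, F A <-> exists n, subset (B n) A.

Definition I1 {X : Type} (xi : Conv X) : Conv X :=
  fun F x => exists H, is_filter H /\ filter_le H F /\ countably_based H /\ xi H x.

Definition countable_character {X : Type} (xi : Conv X) : Prop :=
  conv_eq xi (I1 xi).

Definition sequential {X : Type} (xi : Conv X) : Prop :=
  conv_ge xi (Ttop (I1 xi)).

Definition countable_S0_character {X : Type} (xi : Conv X) : Prop :=
  exists sigma : Conv X, is_convergence sigma /\ pretopology sigma /\
    countable_character sigma /\ conv_ge sigma xi /\ conv_ge xi (Ttop sigma).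

(* Main.v *)
Require Import Defs.
From Stdlib Require Import Classical ClassicalEpsilon Lia Arith.

Section Aux.
Context {X : Type}.

Lemma principal_filter (a : X) : is_filter (principal a).
Proof. split; unfold principal; auto. Qed.

Lemma vic_filter (s : Conv X) y : is_convergence s -> is_filter (vicinity s y).
Proof.
  intros [Hm Hp]; split; unfold vicinity.
  - intros F hF _; apply (filter_full hF).
  - intros A B hAB hA F hF hc; apply (@filter_up _ _ hF A B hAB (hA F hF hc)).
  - intros A B hA hB F hF hc; apply (filter_inter hF); [apply hA|apply hB]; auto.
  - intros h; apply (h (principal y) (principal_filter y) (Hp y)).
Qed.

Lemma vic_le (s : Conv X) F y : is_filter F -> s F y -> filter_le (vicinity s y) F.
Proof. intros hF hc A hA; apply hA; auto. Qed.

Lemma vic_pt (s : Conv X) y A : is_convergence s -> vicinity s y A -> A y.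
Proof. intros [_ Hp] h; apply (h _ (principal_filter y) (Hp y)). Qed.

Lemma keyA (xi sigma : Conv X) : is_convergence xi -> hausdorff xi ->
  is_convergence sigma -> pretopology sigma -> conv_ge sigma xi ->
  conv_ge xi (Ttop sigma) ->
  forall H x, is_filter H -> countably_based H -> xi H x -> sigma H x.
Proof.
  intros hxi hH hs hpre hsx hxT H x hHf [B hB] hxH.
  assert (Vf : forall y, is_filter (vicinity sigma y)) by (intro; apply vic_filter; auto).
  apply (proj1 hs (vicinity sigma x) H x (Vf x) hHf); [| apply hpre].
  intros V hV. destruct (classic (H V)) as [h|hnot]; [exact h| exfalso].
  assert (D : forall n, H (fun z => forall i, i <= n -> B i z)).
  { induction n.
    - apply (@filter_up _ _ hHf (B 0)).
      + intros z hz i hi; replace i with 0 by lia; auto.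
      + apply hB; exists 0; intros z hz; auto.
    - apply (@filter_up _ _ hHf (fun z => (forall i, i <= n -> B i z) /\ B (S n) z)).
      + intros z [h1 h2] i hi. assert (i <= n \/ i = S n) as [e|e] by lia; auto.
        subst; auto.
      + apply (filter_inter hHf); auto. apply hB; exists (S n); intros z hz; auto. }
  assert (Hex : forall n, exists z, (forall i, i <= n -> B i z) /\ ~ V z).
  { intro n. apply NNPP; intro hn. apply hnot.
    apply (@filter_up _ _ hHf (fun z => forall i, i <= n -> B i z) V); [|apply (D n)].
    intros z hz. apply NNPP; intro hv. apply hn; exists z; auto. }
  set (xs := fun n => proj1_sig (constructive_indefinite_description _ (Hex n))).
  assert (hxs : forall n, (forall i, i <= n -> B i (xs n)) /\ ~ V (xs n)).
  { intro n; unfold xs; destruct (constructive_indefinite_description _ (Hex n)); auto. }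
  set (S := fun A : X -> Prop => exists N, forall n, N <= n -> A (xs n)).
  assert (Sf : is_filter S).
  { split; unfold S.
    - exists 0; auto.
    - intros A A' hs' [N hN]; exists N; auto.
    - intros A A' [N1 h1] [N2 h2]; exists (max N1 N2); intros n hn; split;
        [apply h1|apply h2]; lia.
    - intros [N hN]; apply (hN N); auto. }
  assert (HS : filter_le H S).
  { intros A hA. apply hB in hA. destruct hA as [k hk]. exists k.
    intros n hn. apply hk. apply (proj1 (hxs n)); auto. }
  assert (xiS : xi S x) by (apply (proj1 hxi H S x); auto).
  assert (TS : Ttop sigma S x) by (apply hxT; auto).
  set (O := fun z => forall n, xs n <> z).
  assert (notR : forall a y, a <> y -> vicinity sigma y (fun z => a <> z)).
  { intros a y hay. apply NNPP; intro hn.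
    assert (le : filter_le (vicinity sigma y) (principal a)).
    { intros A hA. unfold principal. apply NNPP; intro hA'. apply hn.
      apply (@filter_up _ _ (Vf y) A); auto. intros z hz e; subst; auto. }
    assert (c1 : sigma (principal a) y).
    { apply (proj1 hs (vicinity sigma y)); auto. apply principal_filter. }
    apply hay. apply (hH (principal a)); [apply principal_filter| apply (proj2 hxi)|].
    apply hsx; auto. apply principal_filter. }
  assert (noclus : forall y, exists W N, vicinity sigma y W /\
                     forall n, N <= n -> ~ W (xs n)).
  { intro y. apply NNPP; intro hn.
    assert (hc : forall W N, vicinity sigma y W -> exists n, N <= n /\ W (xs n)).
    { intros W N hW. apply NNPP; intro h2. apply hn. exists W, N. split; auto.
      intros n hn' hw. apply h2; eauto. }
    set (G := fun A : X -> Prop => exists W T, vicinity sigma y W /\ S T /\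
                 subset (fun z => W z /\ T z) A).
    assert (Gf : is_filter G).
    { split; unfold G.
      - exists (fun _ => True), (fun _ => True); refine (conj _ (conj _ _)).
        + apply (filter_full (Vf y)).
        + apply (filter_full Sf).
        + intros z _; auto.
      - intros A A' hAA' [W [T [h1 [h2 h3]]]]; exists W, T; refine (conj _ (conj _ _)); auto.
        intros z hz; auto.
      - intros A A' [W [T [h1 [h2 h3]]]] [W' [T' [h1' [h2' h3']]]].
        exists (fun z => W z /\ W' z), (fun z => T z /\ T' z); refine (conj _ (conj _ _)).
        + apply (filter_inter (Vf y)); auto.
        + apply (filter_inter Sf); auto.
        + intros z hz; split; [apply h3|apply h3']; tauto.
      - intros [W [T [h1 [[N hN] h3]]]].
        destruct (hc W N h1) as [n [hn1 hn2]]. apply (h3 (xs n)); auto. }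
    assert (VG : filter_le (vicinity sigma y) G).
    { intros A hA. exists A, (fun _ => True); refine (conj _ (conj _ _)); auto.
      apply (filter_full Sf). intros z [hz _]; auto. }
    assert (SG : filter_le S G).
    { intros A hA. exists (fun _ => True), A; refine (conj _ (conj _ _)); auto.
      apply (filter_full (Vf y)). intros z [_ hz]; auto. }
    assert (sG : sigma G y) by (apply (proj1 hs (vicinity sigma y)); auto).
    assert (xG : xi G y) by (apply hsx; auto).
    assert (xG' : xi G x) by (apply (proj1 hxi S); auto).
    assert (e : y = x) by (apply (hH G); auto). subst y.
    apply (filter_proper Gf). exists V, (fun z => ~ V z); refine (conj _ (conj _ _)); auto.
    - exists 0; intros n _; apply (proj2 (hxs n)).
    - intros z [h1 h2]; auto. }
  assert (Ovic : forall y, O y -> vicinity sigma y O).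
  { intros y hO. destruct (noclus y) as [W [N [hW hN]]].
    assert (P : forall M, vicinity sigma y (fun z => forall n, n < M -> xs n <> z)).
    { induction M.
      - apply (@filter_up _ _ (Vf y) (fun _ => True)). intros z _ n hn; lia.
        apply (filter_full (Vf y)).
      - apply (@filter_up _ _ (Vf y) (fun z => (forall n, n < M -> xs n <> z) /\ xs M <> z)).
        + intros z [h1 h2] n hn. assert (n < M \/ n = M) as [e|e] by lia; auto.
          subst; auto.
        + apply (filter_inter (Vf y)); [apply IHM|apply notR; apply hO]. }
    apply (@filter_up _ _ (Vf y) (fun z => W z /\ (forall n, n < N -> xs n <> z))).
    - intros z [h1 h2] n. destruct (lt_dec n N) as [l|l]; auto.
      intro e. apply (hN n); [lia| rewrite e; auto].
    - apply (filter_inter (Vf y)); auto. }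
  assert (Oopen : is_open sigma O).
  { intros F z hF hc hz. apply (vic_le sigma F z hF hc). apply Ovic; auto. }
  assert (Ox : O x).
  { intros n e. apply (proj2 (hxs n)). rewrite e. apply (vic_pt sigma x V hs hV). }
  destruct (TS O Oopen Ox) as [N hN]. apply (hN N (le_n N) N); auto.
Qed.


Lemma keyB (xi sigma : Conv X) : is_convergence xi -> hausdorff xi ->
  is_convergence sigma -> pretopology sigma -> countable_character sigma ->
  conv_ge sigma xi -> conv_ge xi (Ttop sigma) -> conv_eq sigma (I1 xi).
Proof.
  intros hxi hH hs hpre [hcc _] hsx hxT. split.
  - intros F x hF hc. destruct (hcc F x hF hc) as [H [h1 [h2 [h3 h4]]]].
    exists H; split; [|split; [|split]]; auto.
  - intros F x hF [H [h1 [h2 [h3 h4]]]].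
    apply (proj1 hs H F x h1 hF h2). apply (keyA xi sigma); auto.
Qed.

Lemma eq_vic (s t : Conv X) y A : conv_eq s t -> vicinity s y A -> vicinity t y A.
Proof. intros [_ h] hv F hF hc; apply hv; auto. Qed.

Lemma eq_open (s t : Conv X) O : conv_eq s t -> is_open s O -> is_open t O.
Proof. intros [_ h] hv F z hF hc; apply hv; auto. Qed.

Lemma I1_conv (xi : Conv X) : is_convergence xi -> is_convergence (I1 xi).
Proof.
  intros [hm hp]; split.
  - intros F G x hF hG hle [H [h1 [h2 [h3 h4]]]]. exists H; split; [|split; [|split]]; auto.
    intros A hA; auto.
  - intro x. exists (principal x). split; [apply principal_filter|split; [|split]].
    + intros A hA; auto.
    + exists (fun _ z => z = x). intro A; unfold principal; split.
      * intro h; exists 0; intros z e; subst; auto.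
      * intros [_ h]; apply h; auto.
    + apply hp.
Qed.

Lemma S0_of (xi sigma : Conv X) : is_convergence xi -> hausdorff xi ->
  is_convergence sigma -> pretopology sigma -> countable_character sigma ->
  conv_ge sigma xi -> conv_ge xi (Ttop sigma) -> pretopology (I1 xi) /\ sequential xi.
Proof.
  intros hxi hH hs hpre hcc hsx hxT.
  assert (E := keyB xi sigma hxi hH hs hpre hcc hsx hxT).
  assert (E' : conv_eq (I1 xi) sigma) by (destruct E; split; auto).
  split.
  - intro x. apply (proj1 E); [apply vic_filter, I1_conv; auto|].
    apply (proj1 hs (vicinity sigma x)); auto.
    + apply vic_filter; auto.
    + apply vic_filter, I1_conv; auto.
    + intros A hA. apply (eq_vic sigma (I1 xi)); auto.
  - intros F x hF hc O hO hOx. apply (hxT F x hF hc); auto.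
    apply (eq_open (I1 xi) sigma); auto.
Qed.
End Aux.

Theorem proposition2p7 (X : Type) (xi : Conv X) :
  is_convergence xi -> hausdorff xi ->
  (countable_S0_character xi <-> (pretopology (I1 xi) /\ sequential xi)) /\
  (countable_S0_character xi ->
     forall sigma : Conv X, is_convergence sigma -> pretopology sigma ->
       countable_character sigma -> conv_ge sigma xi -> conv_ge xi (Ttop sigma) ->
       conv_eq sigma (I1 xi)).
Proof.
  intros hxi hH. split; [split|].
  - intros [s [h1 [h2 [h3 [h4 h5]]]]]. apply (S0_of xi s); auto.
  - intros [hp hseq]. exists (I1 xi). split; [apply I1_conv; auto|split; [auto|split; [|split]]].
    + split.
      * intros F x hF [H [h1 [h2 [h3 h4]]]]. exists H; split; [|split; [|split]]; auto.
        exists H; split; [|split; [|split]]; auto. intros A hA; auto.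
      * intros F x hF [H [h1 [h2 [h3 [H' [h1' [h2' [h3' h4']]]]]]]].
        exists H'; split; [|split; [|split]]; auto. intros A hA; auto.
    + intros F x hF [H [h1 [h2 [h3 h4]]]]. apply (proj1 hxi H F x); auto.
    + exact hseq.
  - intros _ s h1 h2 h3 h4 h5. apply keyB; auto.
Qed.
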